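(* Let $\mathcal{D}=\{(x^{(i)},y^{(i)})\}_{i=1}^N$ be a finite paired dataset with $x^{(i)}\in\mathbb{R}^{d_x}$, $y^{(i)}\in\mathbb{R}^{d_y}$, let $d>d_x$ and $d>d_y$, and let $\alpha,\beta:[0,1]\to\mathbb{R}$ be smooth functions that are nonzero except possibly at $t=0$ and $t=1$. Then there exist a data encoder $f_\phi:\mathbb{R}^{d_x}\to\mathbb{R}^d$ and a label encoder $g_\varphi:\mathbb{R}^{d_y}\to\mathbb{R}^d$ such that $(f_\phi,g_\varphi)$ does not induce a target trajectory crossing for data pairs in $\mathcal{D}$, while $g_\varphi$ (together with a suitable label decoder $d_\psi:\mathbb{R}^d\to\mathbb{R}^{d_y}$) minimizes the label autoencoding loss $\mathcal{L}_{label\_ae}(\psi,\varphi)=\mathbb{E}_{(x,y)\sim\mathcal{D}}\big[\|d_\psi(g_\varphi(y))-y\|_2^2\big]$.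
   Context: Given encoders $f_\phi,g_\varphi$, one sets $z_0=f_\phi(x)$, $z_1=g_\varphi(y)$ and uses the predefined interpolation $z_t=F(z_0,z_1,t)=\alpha_t z_0+\beta_t z_1$ for $t\in[0,1]$. The encoders $(f_\phi,g_\varphi)$ are said to induce a target trajectory crossing if there exists a tuple $(t,x,y,x',y')$, with $(x,y),(x',y')$ data pairs in $\mathcal{D}$, $t\in[0,1]$, $x\neq x'$ and $y\neq y'$, such that $\alpha_t f_\phi(x)+\beta_t g_\varphi(y)=\alpha_t f_\phi(x')+\beta_t g_\varphi(y')$. ''Non-crossing'' means no such tuple exists. *)

(* Defs.v *)
From HB Require Import structures.
From mathcomp Require Import all_boot all_order all_algebra.
From mathcomp Require Import all_classical all_reals all_analysis.
Set Implicit Arguments. Unset Strict Implicit. Unset Printing Implicit Defensive.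
Import Order.TTheory GRing.Theory Num.Theory.
Local Open Scope ring_scope.

(* f is smooth on [0,1]: every iterated derivative is differentiable at every
   point of [0,1] (two-sided derivatives, i.e. f is C^oo on a neighbourhood). *)
Definition smooth_on01 {R : realType} (f : R -> R) : Prop :=
  forall (n : nat) (t : R), 0 <= t <= 1 -> derivable (derive1n n f) t 1.

Definition sqnorm {R : realType} {n : nat} (v : 'rV[R]_n) : R :=
  \sum_(i < n) (v ord0 i) ^+ 2.

Definition label_ae_loss {R : realType} {N dx dy d : nat}
  (D : 'I_N -> 'rV[R]_dx * 'rV[R]_dy)
  (dec : 'rV[R]_d -> 'rV[R]_dy) (enc : 'rV[R]_dy -> 'rV[R]_d) : R :=
  N%:R^-1 * \sum_(i < N) sqnorm (dec (enc (D i).2) - (D i).2).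

Definition trajectory_crossing {R : realType} {N dx dy d : nat}
  (alpha beta : R -> R) (D : 'I_N -> 'rV[R]_dx * 'rV[R]_dy)
  (f : 'rV[R]_dx -> 'rV[R]_d) (g : 'rV[R]_dy -> 'rV[R]_d) : Prop :=
  exists (t : R) (i j : 'I_N),
    0 <= t <= 1 /\ (D i).1 <> (D j).1 /\ (D i).2 <> (D j).2 /\
    alpha t *: f (D i).1 + beta t *: g (D i).2
      = alpha t *: f (D j).1 + beta t *: g (D j).2.

(* Main.v *)
Require Import Defs.
From HB Require Import structures.
From mathcomp Require Import all_boot all_order all_algebra.
From mathcomp Require Import all_classical all_reals all_analysis.
Import Order.TTheory GRing.Theory Num.Theory.
Local Open Scope ring_scope.

Theorem proposition1 (R : realType) (N dx dy d : nat)
  (D : 'I_N -> 'rV[R]_dx * 'rV[R]_dy) (alpha beta : R -> R) :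
  (dx < d)%N -> (dy < d)%N ->
  smooth_on01 alpha -> smooth_on01 beta ->
  (forall t : R, 0 < t < 1 -> alpha t != 0) ->
  (forall t : R, 0 < t < 1 -> beta t != 0) ->
  alpha 0 = 1 -> beta 0 = 0 -> alpha 1 = 0 -> beta 1 = 1 ->
  exists (f : 'rV[R]_dx -> 'rV[R]_d) (g : 'rV[R]_dy -> 'rV[R]_d)
         (dec : 'rV[R]_d -> 'rV[R]_dy),
    ~ trajectory_crossing alpha beta D f g /\
    (forall (dec' : 'rV[R]_d -> 'rV[R]_dy) (g' : 'rV[R]_dy -> 'rV[R]_d),
        label_ae_loss D dec g <= label_ae_loss D dec' g').
Proof.
move=> Hdx Hdy _ _ Ha _ a0 _ a1 b1.
pose c (x : 'rV[R]_dx) : nat :=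
  if [pick i | (D i).1 == x] is Some k then val k else 0%N.
have cinj : forall i j, c (D i).1 = c (D j).1 -> (D i).1 = (D j).1.
  move=> i j; rewrite /c.
  case: pickP => [k /eqP Hk|/(_ i)]; last by rewrite eqxx.
  case: pickP => [l /eqP Hl|/(_ j)]; last by rewrite eqxx.
  by move=> /val_inj kl; rewrite -Hk -Hl kl.
pose e := Ordinal Hdy.
pose f (x : 'rV[R]_dx) : 'rV[R]_d := \row_(k < d) (if val k == dy then (c x)%:R else 0).
pose g (y : 'rV[R]_dy) : 'rV[R]_d :=
  \row_(k < d) (match (insub (val k) : option 'I_dy) with Some k' => y ord0 k' | None => 0 end).
pose dec (z : 'rV[R]_d) : 'rV[R]_dy := \row_(k < dy) z ord0 (widen_ord (ltnW Hdy) k).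
have decg : forall y, dec (g y) = y.
  move=> y; apply/rowP => k; rewrite !mxE /=.
  case: insubP => [k' _ kk'|]; first by rewrite (ord1 (ord0 : 'I_1)); congr (y _ _); exact: val_inj.
  by rewrite /= ltn_ord.
exists f, g, dec; split.
  move=> [t [i [j [/andP [t0 t1] [nx [ny H]]]]]].
  have [t1e|t1'] := eqVneq t 1.
    move: H; rewrite t1e a1 b1 !scale0r !add0r !scale1r => /(congr1 dec).
    rewrite !decg. exact: ny.
  have an : alpha t != 0.
    have [t0e|t0'] := eqVneq t 0; first by rewrite t0e a0 oner_eq0.
    by apply: Ha; rewrite !lt_neqAle t0 t1 eq_sym t0' t1'.
  move/(congr1 (fun v : 'rV[R]_d => v ord0 e)): H.
  rewrite !mxE /= eqxx insubF ?ltnn // !mulr0 !addr0 => /(mulfI an) /eqP.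
  by rewrite eqr_nat => /eqP /cinj.
move=> dec' g'.
have -> : label_ae_loss D dec g = 0.
  rewrite /label_ae_loss big1 ?mulr0 // => i _.
  by rewrite decg subrr /sqnorm big1 // => k _; rewrite mxE expr0n.
apply: mulr_ge0; first by rewrite invr_ge0.
apply: sumr_ge0 => i _; apply: sumr_ge0 => k _; exact: sqr_ge0.
Qed.
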